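(* Let $(T_k)_{k\in\mathbb{N}}$ be i.i.d. with law $\mathcal{T}$ and let $(R_k)_{k\in\mathbb{N}}$ be an independent sequence of independent (not necessarily identically distributed) $[0,\infty]$-valued random variables with $\prod_{k=1}^\infty\mathsf{P}(R_k<T_k)=0$, and let $\tilde T$ be defined a.s. by $\tilde T=R_1+\cdots+R_{k-1}+T_k$ on $\{R_1<T_1,\ldots,R_{k-1}<T_{k-1},T_k\leq R_k\}$, $k\in\mathbb{N}$. If $\overline{F}$ is supermultiplicative then $\mathsf{P}(\tilde T>t)\leq\overline{F}(t)$ for all $t\in[0,\infty)$. If $\overline{F}$ is submultiplicative and additionally $\sum_{l=1}^kR_l\uparrow\infty$ a.s. as $k\to\infty$, then $\mathsf{P}(\tilde T>t)\geq\overline{F}(t)$ for all $t\in[0,\infty)$.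
   Context: Standing assumptions: $\mathcal{T}$ is a probability law on the Borel sets of $[0,\infty]$ with $\mathcal{T}((0,\infty])>0$ and $\inf\mathrm{supp}(\mathcal{T})=0$; $\overline{F}(t):=\mathcal{T}((t,\infty])$ for $t\in[0,\infty)$. $\overline{F}$ is supermultiplicative if $\overline{F}(x+y)\geq\overline{F}(x)\overline{F}(y)$ for all $x,y\in[0,\infty)$, submultiplicative if the reverse inequality holds for all $x,y$. *)

(* Defs.v *)
From HB Require Import structures.
From mathcomp Require Import all_boot all_order all_algebra.
From mathcomp Require Import all_classical all_reals all_analysis measurable_realfun.
Set Implicit Arguments. Unset Strict Implicit. Unset Printing Implicit Defensive.
Import Order.TTheory GRing.Theory Num.Theory.
Local Open Scope classical_set_scope.
Local Open Scope ring_scope.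
Local Open Scope ereal_scope.

Section Defs.
Context {d : measure_display} {Omega : measurableType d} {R : realType}.

Definition mutual_indep (P : probability Omega R) (X : nat -> Omega -> \bar R) :=
  forall (J : seq nat) (B : nat -> set (\bar R)), uniq J ->
    (forall j, measurable (B j)) ->
    P (\bigcap_(j in [set` J]) (X j @^-1` B j)) = \prod_(j <- J) P (X j @^-1` B j).

(* independence of the two sequences X and Y (i.e. of sigma(X_k, k) and
   sigma(Y_k, k)), tested on the generating pi-system of finite cylinders *)
Definition indep_seqs (P : probability Omega R) (X Y : nat -> Omega -> \bar R) :=
  forall (J1 J2 : seq nat) (B C : nat -> set (\bar R)),
    (forall j, measurable (B j)) -> (forall j, measurable (C j)) ->
    P (\bigcap_(j in [set` J1]) (X j @^-1` B j) `&` \bigcap_(j in [set` J2]) (Y j @^-1` C j))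
    = P (\bigcap_(j in [set` J1]) (X j @^-1` B j)) * P (\bigcap_(j in [set` J2]) (Y j @^-1` C j)).

Definition stop_event (T Rs : nat -> Omega -> \bar R) (k : nat) : set Omega :=
  [set w | (forall l, (l < k)%N -> Rs l w < T l w) /\ T k w <= Rs k w].

(* Ttilde = R_0 + ... + R_{k-1} + T_k on stop_event k (these events are
   pairwise disjoint); Ttilde := 0 off their union (a null set). *)
Definition Ttilde (T Rs : nat -> Omega -> \bar R) (w : Omega) : \bar R :=
  \sum_(0 <= k <oo) ((\1_(stop_event T Rs k) w)%:E * (\sum_(l < k) Rs l w + T k w)).

End Defs.

Section Law.
Context {R : realType}.

Definition Fbar (mu : probability (\bar R) R) (t : R) : \bar R :=
  mu [set x : \bar R | t%:E < x].

Definition supermultiplicative (mu : probability (\bar R) R) :=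
  forall x y : R, (0 <= x)%R -> (0 <= y)%R -> Fbar mu x * Fbar mu y <= Fbar mu (x + y).

Definition submultiplicative (mu : probability (\bar R) R) :=
  forall x y : R, (0 <= x)%R -> (0 <= y)%R -> Fbar mu (x + y) <= Fbar mu x * Fbar mu y.

Definition msupp (mu : probability (\bar R) R) : set (\bar R) :=
  [set x | forall U : set (\bar R), open U -> U x -> 0 < mu U].
End Law.

(* Main.v *)
Require Import Defs.
From HB Require Import structures.
From mathcomp Require Import all_boot all_order all_algebra.
From mathcomp Require Import all_classical all_reals all_analysis measurable_realfun.
From mathcomp Require Import lra.
Import Order.TTheory GRing.Theory Num.Theory.
Local Open Scope classical_set_scope.
Local Open Scope ring_scope.
Local Open Scope ereal_scope.

Section PairLaw.
Context (R : realType) (d : measure_display) (Omega : measurableType d)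
  (P : probability Omega R) (d1 d2 : measure_display)
  (X1 : measurableType d1) (X2 : measurableType d2)
  (Z1 : Omega -> X1) (Z2 : Omega -> X2).
Hypothesis mZ1 : measurable_fun setT Z1.
Hypothesis mZ2 : measurable_fun setT Z2.
Hypothesis ind : forall A B, measurable A -> measurable B ->
  P (Z1 @^-1` A `&` Z2 @^-1` B) = P (Z1 @^-1` A) * P (Z2 @^-1` B).

Let Z1p : {mfun Omega >-> X1} := HB.pack Z1 (isMeasurableFun.Build _ _ _ _ _ mZ1).
Let Z2p : {mfun Omega >-> X2} := HB.pack Z2 (isMeasurableFun.Build _ _ _ _ _ mZ2).
Let mZ : measurable_fun setT (fun w => (Z1 w, Z2 w)) := measurable_fun_pair mZ1 mZ2.
Let Zp : {mfun Omega >-> (X1 * X2)%type} :=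
  HB.pack (fun w => (Z1 w, Z2 w)) (isMeasurableFun.Build _ _ _ _ _ mZ).

Lemma pair_law E : measurable E ->
  P ((fun w => (Z1 w, Z2 w)) @^-1` E) =
  \int[distribution P Z1p]_z distribution P Z2p (xsection E z).
Proof.
move=> mE.
have h : (distribution P Z1p \x distribution P Z2p) E = distribution P Zp E.
  apply: product_measure_unique; last exact: mE.
  move=> A B mA mB.
  transitivity (P (Z1 @^-1` A `&` Z2 @^-1` B)); first by [].
  exact: ind.
by rewrite [LHS](_ : _ = distribution P Zp E) // -h.
Qed.

Lemma pair_le E E' : measurable E -> measurable E' ->
  (forall z, P (Z2 @^-1` ((fun y => (z, y)) @^-1` E)) <=
             P (Z2 @^-1` ((fun y => (z, y)) @^-1` E'))) ->
  P ((fun w => (Z1 w, Z2 w)) @^-1` E) <= P ((fun w => (Z1 w, Z2 w)) @^-1` E').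
Proof.
move=> mE mE' H; rewrite !pair_law //.
apply: ge0_le_integral => //.
- exact: (measurable_fun_xsection _ mE).
- exact: (measurable_fun_xsection _ mE').
- by move=> z _; rewrite /distribution /pushforward /= !xsectionE; exact: H.
Qed.

End PairLaw.

Section Key.
Context (R : realType) (mu : probability (\bar R) R).
Hypothesis mu_neg : mu [set x : \bar R | x < 0] = 0.

Lemma mu_ge0set : mu [set y : \bar R | 0 <= y] = 1.
Proof.
have mneg : measurable [set x : \bar R | x < 0].
  rewrite -[X in measurable X]setTI.
  exact: (measurable_lte measurableT (@measurable_id _ _ setT) (measurable_cst (0 : \bar R))).
have -> : [set y : \bar R | 0 <= y] = ~` [set x : \bar R | x < 0].
  by apply/seteqP; split => y /=; rewrite leNgt => /negP.
by rewrite probability_setC // mu_neg sube0.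
Qed.

Lemma key (t : R) (t0 : (0 <= t)%R) (s r : \bar R) (s0 : 0 <= s) (r0 : 0 <= r) :
 (mu [set x | 0 <= x /\ r < x] * mu [set y | 0 <= y /\ t%:E < s + r + y]
   = mu [set x | 0 <= x /\ r < x /\ t%:E < s + x] * mu [set y : \bar R | 0 <= y]) \/
 exists x y : R, [/\ (0 <= x)%R, (0 <= y)%R,
   mu [set x | 0 <= x /\ r < x] * mu [set y | 0 <= y /\ t%:E < s + r + y]
     = Fbar mu x * Fbar mu y &
   mu [set x | 0 <= x /\ r < x /\ t%:E < s + x] * mu [set y : \bar R | 0 <= y]
     = Fbar mu (x + y)].
Proof.
have [h|h] := ltP t%:E (s + r).
  left; congr (_ * _).
    congr (mu _); apply/seteqP; split => x /=.
      move=> [x0 rx]; split => //; split => //.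
      by rewrite (lt_le_trans h) // leeD2l // ltW.
    by move=> [x0 [rx _]].
  congr (mu _); apply/seteqP; split => y /=.
    by case.
  move=> y0; split => //; by rewrite (lt_le_trans h) // leeDl.
right; rewrite mu_ge0set mule1.
case: s s0 h => [s'| |] //= s0 h; last first.
  by move: h; case: r r0 => [r'| |] //=.
case: r r0 h => [r'| |] //= r0 h.
rewrite !lee_fin in s0 r0 h.
exists r', (t - s' - r')%R; split => //.
  by rewrite subr_ge0 lerBrDr addrC.
- rewrite /Fbar; congr (_ * _); congr (mu _); apply/seteqP; split => x /=.
  + by case.
  + by move=> rx; split => //; rewrite (le_trans _ (ltW rx)) // lee_fin.
  + case=> _; case: x => [x'| |] //=; [rewrite -!EFinD !lte_fin; lra | by move=> _; exact: ltry].
  + case: x => [x'| |] //=.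
      by rewrite -!EFinD !lte_fin !lee_fin => ?; split; lra.
    by move=> _; split => //; rewrite ?leey /= ?ltry.
- rewrite /Fbar; congr (mu _); apply/seteqP; split => x /=.
  + case=> _ [_]; case: x => [x'| |] //=; [rewrite -!EFinD !lte_fin; lra | by move=> _; exact: ltry].
  + case: x => [x'| |] //=.
      by rewrite -!EFinD !lte_fin !lee_fin => ?; split; [lra|split; lra].
    by move=> _; split => //; rewrite ?leey /= ?ltry.
Qed.

End Key.

Section Main.
Context (R : realType) (d : measure_display) (Omega : measurableType d)
  (P : probability Omega R) (T Rs : nat -> Omega -> \bar R).
Hypothesis mT : forall k, measurable_fun setT (T k).
Hypothesis mRs : forall k, measurable_fun setT (Rs k).
Hypothesis indT : mutual_indep P T.
Hypothesis indR : mutual_indep P Rs.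
Hypothesis indTR : indep_seqs P T Rs.

Lemma bigcap_fin (X : nat -> Omega -> \bar R) N (B : nat -> set (\bar R)) :
  (forall j, (N <= j)%N -> B j = setT) ->
  \bigcap_j (X j @^-1` B j) = \bigcap_(j in [set` iota 0 N]) (X j @^-1` B j).
Proof.
move=> BT; apply/seteqP; split => w H j.
  by move=> _; apply: H.
move=> _; have [jN|jN] := ltnP j N.
  by apply: H; rewrite /= mem_iota add0n jN.
by rewrite BT.
Qed.

Lemma cyl_prob N (B C : nat -> set (\bar R)) :
  (forall j, measurable (B j)) -> (forall j, measurable (C j)) ->
  (forall j, (N <= j)%N -> B j = setT) -> (forall j, (N <= j)%N -> C j = setT) ->
  P (\bigcap_j (T j @^-1` B j) `&` \bigcap_j (Rs j @^-1` C j)) =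
  (\prod_(j < N) P (T j @^-1` B j)) * \prod_(j < N) P (Rs j @^-1` C j).
Proof.
move=> mB mC BT CT; rewrite (@bigcap_fin T N B BT) (@bigcap_fin Rs N C CT) indTR //.
rewrite indT ?iota_uniq // indR ?iota_uniq //.
by rewrite -!(big_mkord xpredT (fun j => P (_ j @^-1` _ j))) /index_iota subn0.
Qed.

Lemma prod_split N (f g : nat -> \bar R) :
  \prod_(j < N) (f j * g j) = (\prod_(j < N) f j) * \prod_(j < N) g j.
Proof. by rewrite big_split. Qed.

Lemma Pfin (A : set Omega) : measurable A -> P A \is a fin_num.
Proof.
move=> mA; rewrite ge0_fin_numE ?measure_ge0 //.
by rewrite (le_lt_trans (probability_le1 _ mA)) // ltry.
Qed.

Definition cyl (IT IR : set nat) : set (set Omega) :=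
  [set A | exists N (B C : nat -> set (\bar R)),
     [/\ (forall j, measurable (B j)), (forall j, measurable (C j)),
      (forall j, ~ (IT j /\ (j < N)%N) -> B j = setT),
      (forall j, ~ (IR j /\ (j < N)%N) -> C j = setT) &
      A = \bigcap_j (T j @^-1` B j) `&` \bigcap_j (Rs j @^-1` C j)]].

Lemma cyl_measurable IT IR A : cyl IT IR A -> measurable A.
Proof.
move=> [N [B [C [mB mC _ _ ->]]]].
apply: measurableI; apply: bigcapT_measurable => j;
  rewrite -[X in measurable X]setTI; [exact: mT | exact: mRs].
Qed.

Lemma cyl_setI_eq (B C B' C' : nat -> set (\bar R)) :
  (\bigcap_j (T j @^-1` B j) `&` \bigcap_j (Rs j @^-1` C j)) `&`
  (\bigcap_j (T j @^-1` B' j) `&` \bigcap_j (Rs j @^-1` C' j)) =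
  \bigcap_j (T j @^-1` (B j `&` B' j)) `&` \bigcap_j (Rs j @^-1` (C j `&` C' j)).
Proof.
apply/seteqP; split => w /=.
  move=> [[HB HC] [HB' HC']]; split => j _; split;
    [exact: HB|exact: HB'|exact: HC|exact: HC'].
move=> [HB HC]; split; split => j _;
  by [case: (HB j I) | case: (HC j I)].
Qed.

Lemma cyl_setI IT IR : setI_closed (cyl IT IR).
Proof.
move=> A A' [N [B [C [mB mC BT CT ->]]]] [N' [B' [C' [mB' mC' BT' CT' ->]]]].
exists (maxn N N'), (fun j => B j `&` B' j), (fun j => C j `&` C' j); split.
- by move=> j; exact: measurableI.
- by move=> j; exact: measurableI.
- move=> j H; rewrite BT ?BT' ?setIT // => -[ITj jN]; apply: H; split => //;
    by rewrite leq_max jN ?orbT.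
- move=> j H; rewrite CT ?CT' ?setIT // => -[ITj jN]; apply: H; split => //;
    by rewrite leq_max jN ?orbT.
- exact: cyl_setI_eq.
Qed.

Lemma fac (X : nat -> Omega -> \bar R)
  j (F G : set (\bar R)) :
  (F = setT \/ G = setT) -> P (X j @^-1` (F `&` G)) = P (X j @^-1` F) * P (X j @^-1` G).
Proof.
case=> ->; rewrite ?setTI ?setIT preimage_setT probability_setT ?mul1e ?mule1 //.
Qed.

Lemma cyl_indep IT1 IR1 IT2 IR2 A A' :
  (forall j, IT1 j -> IT2 j -> False) -> (forall j, IR1 j -> IR2 j -> False) ->
  cyl IT1 IR1 A -> cyl IT2 IR2 A' -> P (A `&` A') = P A * P A'.
Proof.
move=> dT dR [N [B [C [mB mC BT CT ->]]]] [N' [B' [C' [mB' mC' BT' CT' ->]]]].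
have geT (X : set nat) (F : nat -> set (\bar R)) M : (M <= N + N')%N ->
    (forall j, ~ (X j /\ (j < M)%N) -> F j = setT) ->
    forall j, (N + N' <= j)%N -> F j = setT.
  move=> MN H j jN; apply: H => -[_ jM].
  by have := leq_trans (leq_trans jM MN) jN; rewrite ltnn.
have Nle : (N <= N + N')%N by rewrite leq_addr.
have N'le : (N' <= N + N')%N by rewrite leq_addl.
rewrite cyl_setI_eq.
have h1 : forall j, (N + N' <= j)%N -> B j `&` B' j = setT.
  by move=> j jn; rewrite (geT _ _ _ Nle BT) // (geT _ _ _ N'le BT') // setIT.
have h2 : forall j, (N + N' <= j)%N -> C j `&` C' j = setT.
  by move=> j jn; rewrite (geT _ _ _ Nle CT) // (geT _ _ _ N'le CT') // setIT.
rewrite (@cyl_prob (N + N')) //; last 2 first.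
- by move=> j; exact: measurableI.
- by move=> j; exact: measurableI.
rewrite (@cyl_prob (N + N') B C) //; last 2 first.
- exact: (geT _ _ _ Nle BT).
- exact: (geT _ _ _ Nle CT).
rewrite (@cyl_prob (N + N') B' C') //; last 2 first.
- exact: (geT _ _ _ N'le BT').
- exact: (geT _ _ _ N'le CT').
rewrite (eq_bigr (fun j : 'I_(N + N') => P (T j @^-1` B j) * P (T j @^-1` B' j))); last first.
  move=> j _; apply: (fac T) => //; have [[g1 g2]|g] := pselect (IT1 j /\ (j < N)%N).
    by right; apply: BT' => -[g3 _]; exact: (dT j).
  by left; exact: BT.
rewrite [\prod_(j < N + N') P (Rs j @^-1` _)](eq_bigr (fun j : 'I_(N + N') => P (Rs j @^-1` C j) * P (Rs j @^-1` C' j))); last first.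
  move=> j _; apply: (fac Rs) => //; have [[g1 g2]|g] := pselect (IR1 j /\ (j < N)%N).
    by right; apply: CT' => -[g3 _]; exact: (dR j).
  by left; exact: CT.
by rewrite !big_split /= muleACA.
Qed.

Lemma Plty (A : set Omega) : measurable A -> P A < +oo.
Proof. by move=> mA; rewrite ltey_eq Pfin. Qed.

Arguments Pfin {A}.
Arguments Plty {A}.
Lemma dynkin_indep (A : set Omega) : measurable A ->
  dynkin [set B | measurable B /\ P (A `&` B) = P A * P B].
Proof.
move=> mA; split.
- by split; [exact: measurableT | rewrite setIT probability_setT mule1].
- move=> B [mB HB]; split; first exact: measurableC.
  rewrite probability_setC // -setDE measureD // ?Plty //.
  transitivity (P A - P A * P B); first by congr (_ - _).
  rewrite muleBr ?mule1 // ?Pfin //.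
- move=> F tF HF; split.
    by apply: bigcup_measurable => k _; case: (HF k).
  rewrite setI_bigcupr measure_bigcup //; last first.
    by apply: trivIset_setIl.
    by move=> i _; apply: measurableI => //; case: (HF i).
  rewrite measure_bigcup //; last by move=> i _; case: (HF i).
  rewrite -(fineK (Pfin mA)) -nneseriesZl //.
  apply: eq_eseriesr => i _; rewrite fineK ?Pfin //; by case: (HF i).
Qed.

Arguments Pfin {A}.
Arguments Plty {A}.
Arguments cyl_measurable {IT IR A}.
Definition Gen IT IR := <<s cyl IT IR >>.

Lemma Gen_measurable IT IR A : Gen IT IR A -> measurable A.
Proof.
apply: smallest_sub; first exact: sigma_algebra_measurable.
by move=> B; apply: cyl_measurable.
Qed.

Arguments Gen_measurable {IT IR A}.
Lemma Gen_indep IT1 IR1 IT2 IR2 A B :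
  (forall j, IT1 j -> IT2 j -> False) -> (forall j, IR1 j -> IR2 j -> False) ->
  Gen IT1 IR1 A -> Gen IT2 IR2 B -> P (A `&` B) = P A * P B.
Proof.
move=> dT dR GA GB.
have step1 : forall B, cyl IT2 IR2 B -> forall A, Gen IT1 IR1 A -> P (A `&` B) = P A * P B.
  move=> B0 cB0; have mB0 := cyl_measurable cB0.
  suff : Gen IT1 IR1 `<=` [set A | measurable A /\ P (B0 `&` A) = P B0 * P A].
    by move=> H A0 /H [_]; rewrite setIC muleC.
  rewrite /Gen -setI_closed_g_dynkin_g_sigma_algebra; last exact: cyl_setI.
  apply: smallest_sub; first exact: dynkin_indep.
  move=> A0 cA0; split; first exact: cyl_measurable cA0.
  by rewrite setIC muleC; exact: (cyl_indep _ _ _ _ _ _ dT dR cA0 cB0).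
suff : Gen IT2 IR2 `<=` [set B | measurable B /\ P (A `&` B) = P A * P B].
  by move=> H; case: (H _ GB).
rewrite /Gen -setI_closed_g_dynkin_g_sigma_algebra; last exact: cyl_setI.
apply: smallest_sub; first exact: dynkin_indep (Gen_measurable GA).
move=> B0 cB0; split; first exact: cyl_measurable cB0.
exact: step1.
Qed.



Notation GT IT IR := (g_sigma_algebraType (cyl IT IR)).

Lemma GT_Gen IT IR d' (X : measurableType d') (Z : Omega -> X) :
  @measurable_fun _ _ (GT IT IR) X setT Z ->
  forall A, measurable A -> Gen IT IR (Z @^-1` A).
Proof. by move=> mZ A mA; have := mZ measurableT A mA; rewrite setTI. Qed.

Lemma GT_meas IT IR d' (X : measurableType d') (Z : Omega -> X) :
  @measurable_fun _ _ (GT IT IR) X setT Z -> measurable_fun setT Z.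
Proof.
move=> mZ _ A mA; rewrite setTI; apply: Gen_measurable; exact: (GT_Gen _ _ _ _ _ mZ _ mA).
Qed.

Lemma GT_T IT IR j : IT j -> @measurable_fun _ _ (GT IT IR) _ setT (T j).
Proof.
move=> ITj _ U mU; rewrite setTI; apply: sub_sigma_algebra.
exists j.+1, (fun i => if i == j then U else setT), (fun _ => setT); split.
- by move=> i; case: ifP.
- by move=> i.
- by move=> i H; case: eqP => // eij; exfalso; apply: H; rewrite eij ltnSn.
- by [].
apply/seteqP; split => w /=.
  move=> Uw; split => i _ //=; case: eqP => [->|] //.
by move=> [H _]; have := H j I; rewrite /= eqxx.
Qed.

Lemma GT_R IT IR j : IR j -> @measurable_fun _ _ (GT IT IR) _ setT (Rs j).
Proof.
move=> IRj _ U mU; rewrite setTI; apply: sub_sigma_algebra.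
exists j.+1, (fun _ => setT), (fun i => if i == j then U else setT); split.
- by move=> i.
- by move=> i; case: ifP.
- by [].
- by move=> i H; case: eqP => // eij; exfalso; apply: H; rewrite eij ltnSn.
apply/seteqP; split => w /=.
  move=> Uw; split => i _ //=; case: eqP => [->|] //.
by move=> [_ H]; have := H j I; rewrite /= eqxx.
Qed.


Variable mu : probability (\bar R) R.
Hypothesis mu_neg : mu [set x : \bar R | x < 0] = 0.
Hypothesis lawT : forall k (A : set (\bar R)), measurable A -> P (T k @^-1` A) = mu A.
Hypothesis T0 : forall k w, 0 <= T k w.
Hypothesis R0 : forall k w, 0 <= Rs k w.
Variable t : R.
Hypothesis t0 : (0 <= t)%R.

Lemma rect2 n A B : measurable A -> measurable B ->
  P (T n @^-1` A `&` T n.+1 @^-1` B) = mu A * mu B.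
Proof.
move=> mA mB.
have nn : (n.+1 == n) = false by rewrite gtn_eqF.
have nn' : (n == n.+1) = false by rewrite ltn_eqF.
have Hu : uniq [:: n; n.+1] by rewrite /= inE nn'.
have mB' : forall j, measurable ((fun j => if j == n then A else B) j).
  by move=> j; case: ifP.
have H := indT [:: n; n.+1] (fun j => if j == n then A else B) Hu mB'.
rewrite big_cons big_cons big_nil /= eqxx nn mule1 !lawT // in H.
rewrite -H; congr (P _).
apply/seteqP; split => w /=.
  move=> [HA HB] j /=; rewrite !inE => /orP[] /eqP ->; rewrite ?eqxx ?nn //.
move=> Hw; split.
  by move: (Hw n (mem_head _ _)); rewrite /= eqxx.
have hn1 : n.+1 \in [:: n; n.+1] by rewrite !inE eqxx orbT.
by move: (Hw n.+1 hn1); rewrite /= nn.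
Qed.

Definition Nn n : set Omega := [set w | forall l, (l < n)%N -> Rs l w < T l w].
Definition Sn n (w : Omega) := \sum_(l < n) Rs l w.

Lemma Nn_GT IT IR n : (forall l, (l < n)%N -> IT l /\ IR l) ->
  @measurable _ (GT IT IR) (Nn n).
Proof.
move=> H.
have -> : Nn n = \bigcap_(l in [set l | (l < n)%N]) [set w | Rs l w < T l w].
  by apply/seteqP; split => w /= Hw l ln; exact: Hw.
apply: bigcap_measurableType => l ln; rewrite -[X in measurable X]setTI.
by apply: measurable_lte => //; [apply: GT_R | apply: GT_T]; case: (H l ln).
Qed.

Lemma Sn_GT IT IR n : (forall l, (l < n)%N -> IR l) ->
  @measurable_fun _ _ (GT IT IR) _ setT (Sn n).
Proof.
elim: n => [|n IH] H.
  rewrite /Sn; under eq_fun do rewrite big_ord0; exact: measurable_cst.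
rewrite /Sn; under eq_fun do rewrite big_ord_recr /=.
apply: emeasurable_funD.
  by apply: IH => l ln; apply: H; rewrite ltnS ltnW.
by apply: GT_R; apply: H.
Qed.

Lemma Sn0 n w : 0 <= Sn n w.
Proof. by apply: sume_ge0 => l _; exact: R0. Qed.

Lemma NnS n w : Nn n.+1 w <-> Nn n w /\ Rs n w < T n w.
Proof.
split.
  move=> H; split; last exact: H.
  by move=> l ln; apply: H; rewrite ltnS ltnW.
move=> [H1 H2] l; rewrite ltnS leq_eqVlt => /orP[/eqP -> //|]; exact: H1.
Qed.

Lemma SnS n w : Sn n.+1 w = Sn n w + Rs n w.
Proof. by rewrite /Sn big_ord_recr. Qed.

Notation P12 := ((\bar R * (\bar R * \bar R)) * (\bar R * \bar R))%type.

Definition EL : set P12 :=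
  [set p | p.1.1 = 1] `&` (([set p | 0 <= p.1.2.1] `&` [set p | 0 <= p.1.2.2]) `&`
  (([set p | 0 <= p.2.1] `&` [set p | p.1.2.2 < p.2.1]) `&`
   ([set p | 0 <= p.2.2] `&` [set p | t%:E < p.1.2.1 + p.1.2.2 + p.2.2]))).

Definition ER : set P12 :=
  [set p | p.1.1 = 1] `&` (([set p | 0 <= p.1.2.1] `&` [set p | 0 <= p.1.2.2]) `&`
  (([set p | 0 <= p.2.1] `&` ([set p | p.1.2.2 < p.2.1] `&` [set p | t%:E < p.1.2.1 + p.2.1])) `&`
   [set p | 0 <= p.2.2])).

Let mfe : measurable_fun setT (fun p : P12 => p.1.1) :=
  measurableT_comp measurable_fst measurable_fst.
Let mfs : measurable_fun setT (fun p : P12 => p.1.2.1) :=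
  measurableT_comp measurable_fst (measurableT_comp measurable_snd measurable_fst).
Let mfr : measurable_fun setT (fun p : P12 => p.1.2.2) :=
  measurableT_comp measurable_snd (measurableT_comp measurable_snd measurable_fst).
Let mfx : measurable_fun setT (fun p : P12 => p.2.1) :=
  measurableT_comp measurable_fst measurable_snd.
Let mfy : measurable_fun setT (fun p : P12 => p.2.2) :=
  measurableT_comp measurable_snd measurable_snd.

Lemma mlte d' (X : measurableType d') (f g : X -> \bar R) :
  measurable_fun setT f -> measurable_fun setT g -> measurable [set p | f p < g p].
Proof. by move=> mf mg; rewrite -[X in measurable X]setTI; exact: measurable_lte. Qed.
Lemma mlee d' (X : measurableType d') (f g : X -> \bar R) :
  measurable_fun setT f -> measurable_fun setT g -> measurable [set p | f p <= g p].
Proof. by move=> mf mg; rewrite -[X in measurable X]setTI; exact: measurable_lee. Qed.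
Lemma meqe d' (X : measurableType d') (f g : X -> \bar R) :
  measurable_fun setT f -> measurable_fun setT g -> measurable [set p | f p = g p].
Proof. by move=> mf mg; rewrite -[X in measurable X]setTI; exact: measurable_eqe. Qed.

Lemma mEL : measurable EL.
Proof.
repeat apply: measurableI.
- by apply: meqe; [exact: mfe | exact: measurable_cst].
- by apply: mlee; [exact: measurable_cst | exact: mfs].
- by apply: mlee; [exact: measurable_cst | exact: mfr].
- by apply: mlee; [exact: measurable_cst | exact: mfx].
- by apply: mlte; [exact: mfr | exact: mfx].
- by apply: mlee; [exact: measurable_cst | exact: mfy].
- apply: mlte; first exact: measurable_cst.
  by apply: emeasurable_funD => //; apply: emeasurable_funD.
Qed.

Lemma mER : measurable ER.
Proof.
repeat apply: measurableI.
- by apply: meqe; [exact: mfe | exact: measurable_cst].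
- by apply: mlee; [exact: measurable_cst | exact: mfs].
- by apply: mlee; [exact: measurable_cst | exact: mfr].
- by apply: mlee; [exact: measurable_cst | exact: mfx].
- by apply: mlte; [exact: mfr | exact: mfx].
- apply: mlte; first exact: measurable_cst.
  by apply: emeasurable_funD.
- by apply: mlee; [exact: measurable_cst | exact: mfy].
Qed.

Definition Z1 n (w : Omega) : \bar R * (\bar R * \bar R) :=
  ((\1_(Nn n) w)%:E, (Sn n w, Rs n w)).
Definition Z2 n (w : Omega) : \bar R * \bar R := (T n w, T n.+1 w).

Definition ev_b n := Nn n `&` [set w | t%:E < Sn n w + T n w].
Definition ev_c n :=
  (Nn n `&` [set w | Rs n w < T n w]) `&` [set w | t%:E < Sn n w + T n w].

Lemma ind1 (A : set Omega) w : ((\1_A w)%:E = 1 :> \bar R) <-> A w.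
Proof.
have [wA|wA] := pselect (A w).
  by rewrite indicE (mem_set wA).
rewrite indicE memNset //=; split => // -[] /eqP.
by rewrite eq_sym oner_eq0.
Qed.

Lemma preL n : ev_b n.+1 = (fun w => (Z1 n w, Z2 n w)) @^-1` EL.
Proof.
apply/seteqP; split => w /=.
  move=> [/NnS [HN HR] /= Ht]; rewrite SnS in Ht.
  split; first by apply/ind1.
  split; first by split; [exact: Sn0 | exact: R0].
  split; split; [exact: T0 | exact: HR | exact: T0 | exact: Ht].
move=> [/ind1 HN [[_ _] [[_ HR] [_ Ht]]]]; split; first by apply/NnS.
by rewrite /= SnS.
Qed.

Lemma preR n : ev_c n = (fun w => (Z1 n w, Z2 n w)) @^-1` ER.
Proof.
apply/seteqP; split => w /=.
  move=> [[HN HR] Ht].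
  split; first by apply/ind1.
  split; first by split; [exact: Sn0 | exact: R0].
  split; [split; [exact: T0 | split; [exact: HR | exact: Ht]] | exact: T0].
by move=> [/ind1 HN [[_ _] [[_ [HR Ht]] _]]].
Qed.

Lemma mset1 (r : \bar R) : measurable [set x : \bar R | 0 <= x /\ r < x].
Proof.
apply: measurableI.
  by apply: mlee; [exact: measurable_cst | exact: measurable_id].
by apply: mlte; [exact: measurable_cst | exact: measurable_id].
Qed.

Lemma mset2 (s r : \bar R) : measurable [set y : \bar R | 0 <= y /\ t%:E < s + r + y].
Proof.
apply: measurableI.
  by apply: mlee; [exact: measurable_cst | exact: measurable_id].
apply: mlte; first exact: measurable_cst.
by apply: emeasurable_funD; [exact: measurable_cst | exact: measurable_id].
Qed.

Lemma mset3 (s r : \bar R) : measurable [set x : \bar R | 0 <= x /\ r < x /\ t%:E < s + x].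
Proof.
apply: measurableI.
  by apply: mlee; [exact: measurable_cst | exact: measurable_id].
apply: measurableI.
  by apply: mlte; [exact: measurable_cst | exact: measurable_id].
apply: mlte; first exact: measurable_cst.
by apply: emeasurable_funD; [exact: measurable_cst | exact: measurable_id].
Qed.

Lemma mset4 : measurable [set y : \bar R | 0 <= y].
Proof. by apply: mlee; [exact: measurable_cst | exact: measurable_id]. Qed.

Lemma pointwise n (z : \bar R * (\bar R * \bar R)) :
 let L := P (Z2 n @^-1` ((fun y => (z, y)) @^-1` EL)) in
 let Rr := P (Z2 n @^-1` ((fun y => (z, y)) @^-1` ER)) in
 L = Rr \/ exists x y : R, [/\ (0 <= x)%R, (0 <= y)%R,
    L = Fbar mu x * Fbar mu y & Rr = Fbar mu (x + y)].
Proof.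
case: z => e [s r] /=.
have [[e1 [s0 r0]]|nc] := pselect (e = 1 /\ 0 <= s /\ 0 <= r); last first.
  have hL : Z2 n @^-1` ((fun y => ((e, (s, r)), y)) @^-1` EL) = set0.
    apply/seteqP; split => w // [e1 [[s0 r0] _]].
    by exfalso; apply: nc; split => //; split.
  have hR : Z2 n @^-1` ((fun y => ((e, (s, r)), y)) @^-1` ER) = set0.
    apply/seteqP; split => w // [e1 [[s0 r0] _]].
    by exfalso; apply: nc; split => //; split.
  by left; rewrite hL hR.
have hL : Z2 n @^-1` ((fun y => ((e, (s, r)), y)) @^-1` EL) =
    T n @^-1` [set x | 0 <= x /\ r < x] `&`
    T n.+1 @^-1` [set y | 0 <= y /\ t%:E < s + r + y].
  apply/seteqP; split => w.
    by move=> [_ [_ [[x0 rx] [y0 ty]]]].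
  move=> [[x0 rx] [y0 ty]]; split; first exact: e1.
  split; first by split.
  by split; split.
have hR : Z2 n @^-1` ((fun y => ((e, (s, r)), y)) @^-1` ER) =
    T n @^-1` [set x | 0 <= x /\ r < x /\ t%:E < s + x] `&`
    T n.+1 @^-1` [set y : \bar R | 0 <= y].
  apply/seteqP; split => w.
    by move=> [_ [_ [[x0 [rx tx]] y0]]].
  move=> [[x0 [rx tx]] y0]; split; first exact: e1.
  split; first by split.
  by split; [split; [exact: x0 | split] | exact: y0].
rewrite hL hR.
rewrite !rect2 //; [|exact: mset3|exact: mset4|exact: mset1|exact: mset2].
exact: key.
Qed.

Let sideT1 n := [set l | (l < n)%N].
Let sideR1 n := [set l | (l <= n)%N].
Let sideT2 n := [set l | l = n \/ l = n.+1].

Lemma mZ1 n : @measurable_fun _ _ (GT (sideT1 n) (sideR1 n)) _ setT (Z1 n).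
Proof.
apply: measurable_fun_pair.
  apply/measurable_EFinP; apply: measurable_indic.
  by apply: Nn_GT => l ln; split => //; rewrite /sideR1 /= ltnW.
apply: measurable_fun_pair.
  by apply: Sn_GT => l ln; rewrite /sideR1 /= ltnW.
by apply: GT_R; rewrite /sideR1 /=.
Qed.

Lemma mZ2 n : @measurable_fun _ _ (GT (sideT2 n) set0) _ setT (Z2 n).
Proof.
by apply: measurable_fun_pair; apply: GT_T; rewrite /sideT2 /=; [left|right].
Qed.

Lemma pair_ind n A B : measurable A -> measurable B ->
  P (Z1 n @^-1` A `&` Z2 n @^-1` B) = P (Z1 n @^-1` A) * P (Z2 n @^-1` B).
Proof.
move=> mA mB.
apply: (Gen_indep (sideT1 n) (sideR1 n) (sideT2 n) set0).
- move=> j jn [E|E]; move: jn; rewrite /sideT1 /= E; first by rewrite ltnn.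
  by rewrite ltnNge leqnSn.
- by move=> j _.
- exact: (GT_Gen _ _ _ _ _ (mZ1 n) _ mA).
- exact: (GT_Gen _ _ _ _ _ (mZ2 n) _ mB).
Qed.

Lemma step_super : supermultiplicative mu -> forall n, P (ev_b n.+1) <= P (ev_c n).
Proof.
move=> sup n; rewrite preL preR.
apply: (pair_le _ _ _ _ _ _ _ _ _ _ (GT_meas _ _ _ _ _ (mZ1 n)) (GT_meas _ _ _ _ _ (mZ2 n)) (pair_ind n) _ _ mEL mER).
move=> z; case: (pointwise n z) => [->//|[x [y [x0 y0 -> ->]]]].
exact: sup.
Qed.

Lemma step_sub : submultiplicative mu -> forall n, P (ev_c n) <= P (ev_b n.+1).
Proof.
move=> sub n; rewrite preL preR.
apply: (pair_le _ _ _ _ _ _ _ _ _ _ (GT_meas _ _ _ _ _ (mZ1 n)) (GT_meas _ _ _ _ _ (mZ2 n)) (pair_ind n) _ _ mER mEL).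
move=> z; case: (pointwise n z) => [->//|[x [y [x0 y0 -> ->]]]].
exact: sub.
Qed.

Definition ev_a n := stop_event T Rs n `&` [set w | t%:E < Sn n w + T n w].

Notation GA := (GT setT setT).

Lemma mGA (A : set Omega) : @measurable _ GA A -> measurable A.
Proof. by move=> h; exact: Gen_measurable h. Qed.

Lemma Nn_GA n : @measurable _ GA (Nn n).
Proof. by apply: Nn_GT. Qed.

Lemma mSnT_GA n : @measurable_fun _ _ GA _ setT (fun w => Sn n w + T n w).
Proof. by apply: emeasurable_funD; [exact: Sn_GT | exact: GT_T]. Qed.

Lemma m_ev_a n : measurable (ev_a n).
Proof.
apply: mGA; apply: measurableI.
  apply: measurableI; first exact: Nn_GA.
  by apply: mlee; [exact: GT_T | exact: GT_R].
by apply: mlte; [exact: measurable_cst | exact: mSnT_GA].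
Qed.

Lemma m_ev_b n : measurable (ev_b n).
Proof.
apply: mGA; apply: measurableI; first exact: Nn_GA.
by apply: mlte; [exact: measurable_cst | exact: mSnT_GA].
Qed.

Lemma m_ev_c n : measurable (ev_c n).
Proof.
apply: mGA; apply: measurableI.
  apply: measurableI; first exact: Nn_GA.
  by apply: mlte; [exact: GT_R | exact: GT_T].
by apply: mlte; [exact: measurable_cst | exact: mSnT_GA].
Qed.

Lemma b_split n : P (ev_b n) = P (ev_a n) + P (ev_c n).
Proof.
rewrite -measureU; [|exact: m_ev_a|exact: m_ev_c|].
  congr (P _); apply/seteqP; split => w.
    move=> [HN Ht]; have [h|h] := leP (T n w) (Rs n w).
      by left; split.
    by right; split.
  by move=> [[[HN h] Ht]|[[HN h] Ht]]; split.
apply/seteqP; split => w // [[[_ h1] _] [[_ h2] _]].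
by move: h2 h1 => /= h2 h1; move: h2; rewrite ltNge h1.
Qed.

Lemma b0 : P (ev_b 0) = Fbar mu t.
Proof.
rewrite /Fbar -(lawT 0); last by apply: mlte; [exact: measurable_cst | exact: measurable_id].
congr (P _); apply/seteqP; split => w.
  by move=> [_]; rewrite /= /Sn big_ord0 add0e.
move=> h; split; first by move=> l; rewrite ltn0.
by rewrite /= /Sn big_ord0 add0e.
Qed.

Lemma Q_super : supermultiplicative mu ->
  forall n, \sum_(k < n) P (ev_a k) + P (ev_b n) <= Fbar mu t.
Proof.
move=> sup; elim => [|n IH]; first by rewrite big_ord0 add0e b0.
apply: le_trans IH; rewrite big_ord_recr /= -addeA (b_split n).
by apply: leeD2l; apply: leeD2l; exact: step_super.
Qed.

Lemma Q_sub : submultiplicative mu ->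
  forall n, Fbar mu t <= \sum_(k < n) P (ev_a k) + P (ev_b n).
Proof.
move=> sub; elim => [|n IH]; first by rewrite big_ord0 add0e b0.
apply: le_trans IH _; rewrite big_ord_recr /= -addeA (b_split n).
by apply: leeD2l; apply: leeD2l; exact: step_sub.
Qed.

Lemma PNn n : P (Nn n) = \prod_(k < n) P [set w | Rs k w < T k w].
Proof.
elim: n => [|n IH].
  rewrite big_ord0 (_ : Nn 0 = setT) ?probability_setT //.
  by apply/seteqP; split => w // _ l; rewrite ltn0.
rewrite big_ord_recr /= -IH.
rewrite (_ : Nn n.+1 = Nn n `&` [set w | Rs n w < T n w]); last first.
  by apply/seteqP; split => w /NnS.
apply: (Gen_indep [set l | (l < n)%N] [set l | (l < n)%N] [set n] [set n]).
- by move=> j /= jn jE; move: jn; rewrite jE ltnn.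
- by move=> j /= jn jE; move: jn; rewrite jE ltnn.
- by apply: Nn_GT.
- have h : @measurable _ (GT [set n] [set n]) [set w | Rs n w < T n w].
    by apply: mlte; [exact: GT_R | exact: GT_T].
  exact: h.
Qed.

Lemma stop_uniq j k w : stop_event T Rs j w -> stop_event T Rs k w -> j = k.
Proof.
move=> [Hj1 Hj2] [Hk1 Hk2].
case: (ltngtP j k) => // jk; exfalso.
  by move: (Hk1 j jk); rewrite ltNge Hj2.
by move: (Hj1 k jk); rewrite ltNge Hk2.
Qed.

Lemma Ttilde_stop k0 w : stop_event T Rs k0 w -> Ttilde T Rs w = Sn k0 w + T k0 w.
Proof.
move=> Hk0; rewrite /Ttilde; apply: lim_near_cst => //.
exists k0.+1 => // n /= hn.
rewrite (bigD1_seq k0) /=; first last.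
- by rewrite /index_iota subn0 iota_uniq.
- by rewrite mem_index_iota.
rewrite [X in _ + X = _]big1 ?adde0.
  by rewrite indicE (mem_set Hk0) mul1e.
move=> k kk0; rewrite indicE memNset ?mul0e //.
by move=> Hk; move/eqP: kk0; apply; exact: stop_uniq Hk Hk0.
Qed.

Lemma Ttilde_none w : (forall k, ~ stop_event T Rs k w) -> Ttilde T Rs w = 0.
Proof.
move=> Hn; rewrite /Ttilde; apply: lim_near_cst => //.
exists 0%N => // n _; rewrite big1 // => k _.
by rewrite indicE memNset ?mul0e.
Qed.

Lemma Tt_union : [set w | t%:E < Ttilde T Rs w] = \bigcup_k ev_a k.
Proof.
apply/seteqP; split => w.
  move=> /= H; have [[k Hk]|Hn] := pselect (exists k, stop_event T Rs k w).
    by exists k => //; split => //=; rewrite -(Ttilde_stop _ _ Hk).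
  exfalso; rewrite Ttilde_none in H; last by move=> k Hk; apply: Hn; exists k.
  by move: H; rewrite lte_fin ltNge t0.
by move=> [k _ [Hk Ht]] /=; rewrite (Ttilde_stop _ _ Hk).
Qed.

Lemma triv_a : trivIset setT ev_a.
Proof. by move=> i j _ _ [w [[Hi _] [Hj _]]]; exact: stop_uniq Hi Hj. Qed.

Lemma cvg_a : (fun n => \sum_(0 <= i < n) P (ev_a i)) @ \oo --> P (\bigcup_k ev_a k).
Proof. exact: measure_sigma_additive m_ev_a triv_a. Qed.

Lemma final_super : supermultiplicative mu ->
  P [set w | t%:E < Ttilde T Rs w] <= Fbar mu t.
Proof.
move=> sup; rewrite Tt_union -(cvg_lim _ cvg_a) //.
apply: lime_le; first by apply/cvg_ex; eexists; exact: cvg_a.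
exists 0%N => // n _ /=; rewrite big_mkord.
apply: le_trans (Q_super sup n).
by apply: leeDl; apply: measure_ge0; exact: m_ev_b.
Qed.

Lemma final_sub : submultiplicative mu ->
  (fun n => \prod_(k < n) P [set w | Rs k w < T k w]) @ \oo --> 0 ->
  Fbar mu t <= P [set w | t%:E < Ttilde T Rs w].
Proof.
move=> sub hprod; rewrite Tt_union.
have hN : (fun n => P (Nn n)) @ \oo --> 0.
  have -> : (fun n => P (Nn n)) = (fun n => \prod_(k < n) P [set w | Rs k w < T k w]).
    by apply/funext => n; exact: PNn.
  exact: hprod.
have hdef : P (\bigcup_k ev_a k) +? 0 by rewrite fin_num_adde_defl.
have hs : (fun n => \sum_(0 <= i < n) P (ev_a i) + P (Nn n)) @ \oo -->
    P (\bigcup_k ev_a k) + 0 by apply: cvgeD => //; first exact: cvg_a.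
rewrite adde0 in hs.
rewrite -(cvg_lim _ hs) //.
apply: lime_ge; first by apply/cvg_ex; eexists; exact: hs.
exists 0%N => // n _ /=; rewrite big_mkord.
apply: le_trans (Q_sub sub n) _.
apply: leeD2l; apply: le_measure; rewrite ?inE; [exact: m_ev_b | | by move=> w []].
by apply: mGA; exact: Nn_GA.
Qed.

End Main.

Theorem mainTheorem12 (R : realType) (d : measure_display) (Omega : measurableType d)
  (P : probability Omega R) (mu : probability (\bar R) R)
  (T Rs : nat -> Omega -> \bar R) :
  (* standing assumptions on the law mu (= script T) on [0, +oo] *)
  mu [set x : \bar R | x < 0] = 0 ->
  0 < mu [set x : \bar R | 0 < x] ->
  ereal_inf (msupp mu) = 0 ->
  (* T_k : i.i.d. [0,+oo]-valued random variables with law mu *)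
  (forall k, measurable_fun setT (T k)) ->
  (forall k w, 0 <= T k w) ->
  (forall k (A : set (\bar R)), measurable A -> P (T k @^-1` A) = mu A) ->
  mutual_indep P T ->
  (* R_k : independent [0,+oo]-valued random variables, independent of (T_k) *)
  (forall k, measurable_fun setT (Rs k)) ->
  (forall k w, 0 <= Rs k w) ->
  mutual_indep P Rs ->
  indep_seqs P T Rs ->
  (* prod_k P(R_k < T_k) = 0 *)
  (fun n => \prod_(k < n) P [set w | Rs k w < T k w]) @ \oo --> 0 ->
  (supermultiplicative mu ->
     forall t : R, (0 <= t)%R -> P [set w | t%:E < Ttilde T Rs w] <= Fbar mu t)
  /\
  (submultiplicative mu ->
     {ae P, forall w, (fun k => \sum_(l < k) Rs l w) @ \oo --> +oo} ->
     forall t : R, (0 <= t)%R -> Fbar mu t <= P [set w | t%:E < Ttilde T Rs w]).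

Proof.
move=> mu_neg _ _ mT T0 lawT indT mRs R0 indR indTR hprod; split.
  move=> sup t t0.
  exact: (final_super R d Omega P T Rs mT mRs indT indR indTR mu mu_neg lawT T0 R0 t t0 sup).
move=> sub _ t t0.
exact: (final_sub R d Omega P T Rs mT mRs indT indR indTR mu mu_neg lawT T0 R0 t t0 sub hprod).
Qed.
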